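(* Every $\Sigma^1_1\text{-}\mathrm{KROM}^r$ formula is equivalent (on all finite structures) to a formula of the form $\exists\bar{y}_1\phi_1\vee\cdots\vee\exists\bar{y}_n\phi_n$, where each $\phi_i$ ($1\le i\le n$) is a $\Sigma^1_1\text{-}\mathrm{KROM}$ formula (possibly with free first-order variables $\bar{y}_i$).
   Context: All structures are finite; every vocabulary contains equality. For a vocabulary $\tau$, an SO-KROM$^r(\tau)$ formula is a second-order formula of the form $Q_1R_1\cdots Q_mR_m\forall\bar{x}(C_1\wedge\cdots\wedge C_n)$, where each $Q_i\in\{\forall,\exists\}$, $R_1,\dots,R_m$ are second-order relation variables, and each clause $C_j$ is a disjunction $\beta_1\vee\cdots\vee\beta_q\vee H_1\vee H_2$ in which each $\beta_s$ is an atomic or negated atomic $\tau$-formula ($P\bar{y}$ or $\neg P\bar{y}$, $P\in\tau$, including equality), and each $H_t$ is one of $R_i\bar{z}$, $\neg R_i\bar{z}$, $\exists z_1\cdots\exists z_{r}R_i z_1\dots z_r$ ($r$ the arity of $R_i$), or $\bot$. SO-KROM is the same without the option $\exists z_1\cdots\exists z_rR_iz_1\dots z_r$ for $H_t$. $\Sigma^1_1\text{-}\mathrm{KROM}^r$ (resp. $\Sigma^1_1\text{-}\mathrm{KROM}$) consists of those SO-KROM$^r$ (resp. SO-KROM) formulas all of whose second-order quantifiers are existential. *)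

(* Defs.v *)
From Stdlib Require List.
From mathcomp Require Import all_boot.
Set Implicit Arguments. Unset Strict Implicit. Unset Printing Implicit Defensive.

(* A vocabulary tau is a list of arities: relation symbol P_j (j < size tau)
   has arity nth 0 tau j.
   Second-order variables R_i are referred to by their position i in the
   quantifier prefix of the formula, so they are automatically distinct
   and bound. *)

Inductive tlit :=
| TAtom (pos : bool) (j : nat) (ys : seq nat)
| TEq (pos : bool) (y1 y2 : nat).

Inductive hlit :=
| HAtom (pos : bool) (i : nat) (zs : seq nat)
| HEx (i : nat)
| HBot.

Record clause := Clause { cl_betas : seq tlit; cl_H1 : hlit; cl_H2 : hlit }.

(* Q1 R1 ... Qm Rm forall xbar (C1 /\ ... /\ Cn);
   prefix entries are (is_existential, arity of R_i). *)
Record soformula := SOF {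
  prefix : seq (bool * nat);
  fovars : seq nat;
  clauses : seq clause }.

Definition so_arity (f : soformula) (i : nat) : nat := nth 0 (map snd (prefix f)) i.

Definition wf_tlit (tau : seq nat) (l : tlit) : bool :=
  match l with
  | TAtom _ j ys => (j < size tau) && (size ys == nth 0 tau j)
  | TEq _ _ _ => true
  end.

Definition wf_hlit (f : soformula) (h : hlit) : bool :=
  match h with
  | HAtom _ i zs => (i < size (prefix f)) && (size zs == so_arity f i)
  | HEx i => i < size (prefix f)
  | HBot => true
  end.

Definition wf_clause (tau : seq nat) (f : soformula) (c : clause) : bool :=
  all (wf_tlit tau) (cl_betas c) && wf_hlit f (cl_H1 c) && wf_hlit f (cl_H2 c).

Definition is_SO_KROMr (tau : seq nat) (f : soformula) : bool :=
  all (wf_clause tau f) (clauses f).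

Definition not_HEx (h : hlit) : bool := if h is HEx _ then false else true.

Definition is_SO_KROM (tau : seq nat) (f : soformula) : bool :=
  is_SO_KROMr tau f &&
  all (fun c => not_HEx (cl_H1 c) && not_HEx (cl_H2 c)) (clauses f).

Definition is_Sigma11 (f : soformula) : bool := all fst (prefix f).

Definition is_Sigma11_KROMr tau f := is_SO_KROMr tau f && is_Sigma11 f.
Definition is_Sigma11_KROM tau f := is_SO_KROM tau f && is_Sigma11 f.

(* A tau-structure: a finite domain A with interpretation I j of symbol P_j
   (only tuples of the right length matter). *)
Section Semantics.
Variables (A : finType) (I : nat -> seq A -> bool).

Definition upd {X} (s : nat -> X) (x : nat) (a : X) : nat -> X :=
  fun y => if y == x then a else s y.

Fixpoint forall_vars (xs : seq nat) (s : nat -> A) (P : (nat -> A) -> Prop) : Prop :=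
  match xs with
  | [::] => P s
  | x :: xs' => forall a : A, forall_vars xs' (upd s x a) P
  end.

Fixpoint exists_vars (xs : seq nat) (s : nat -> A) (P : (nat -> A) -> Prop) : Prop :=
  match xs with
  | [::] => P s
  | x :: xs' => exists a : A, exists_vars xs' (upd s x a) P
  end.

Definition eval_tlit (s : nat -> A) (l : tlit) : bool :=
  match l with
  | TAtom b j ys => I j (map s ys) == b
  | TEq b y1 y2 => (s y1 == s y2) == b
  end.

Definition eval_hlit (f : soformula) (rho : nat -> seq A -> Prop) (s : nat -> A)
  (h : hlit) : Prop :=
  match h with
  | HAtom b i zs => if b then rho i (map s zs) else ~ rho i (map s zs)
  | HEx i => exists t : seq A, size t = so_arity f i /\ rho i t
  | HBot => False
  end.

Definition sat_clause f rho s (c : clause) : Prop :=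
  List.Exists (fun l => eval_tlit s l) (cl_betas c)
  \/ eval_hlit f rho s (cl_H1 c) \/ eval_hlit f rho s (cl_H2 c).

Fixpoint sat_prefix (pre : seq (bool * nat)) (i : nat) (rho : nat -> seq A -> Prop)
  (body : (nat -> seq A -> Prop) -> Prop) : Prop :=
  match pre with
  | [::] => body rho
  | (q, _) :: pre' =>
      if q then exists R : seq A -> Prop, sat_prefix pre' i.+1 (upd rho i R) body
      else forall R : seq A -> Prop, sat_prefix pre' i.+1 (upd rho i R) body
  end.

Definition sat (f : soformula) (s : nat -> A) : Prop :=
  sat_prefix (prefix f) 0 (fun _ _ => False)
    (fun rho => forall_vars (fovars f) s
       (fun s' => forall c, List.In c (clauses f) -> sat_clause f rho s' c)).

End Semantics.

(* Main.v *)
Require Import Defs.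
From mathcomp Require Import all_boot.
From mathcomp Require Import zify.
From Stdlib Require List.
From Stdlib Require Import Classical ClassicalEpsilon FunctionalExtensionality.

Set Implicit Arguments. Unset Strict Implicit. Unset Printing Implicit Defensive.

Definition vars_tlit (l : tlit) : seq nat :=
  match l with TAtom _ _ ys => ys | TEq _ a b => [:: a; b] end.
Definition vars_hlit (h : hlit) : seq nat :=
  match h with HAtom _ _ zs => zs | _ => [::] end.
Definition vars_clause (c : clause) : seq nat :=
  flatten (map vars_tlit (cl_betas c)) ++ vars_hlit (cl_H1 c) ++ vars_hlit (cl_H2 c).
Definition bnd (f : soformula) : nat :=
  (foldr maxn 0 (fovars f ++ flatten (map vars_clause (clauses f)))).+1.
Definition Kof (f : soformula) : nat := (sumn (map snd (Defs.prefix f))).+1.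
Definition ysof (f : soformula) (i : nat) : seq nat :=
  [seq bnd f + (i * Kof f + k) | k <- iota 0 (so_arity f i)].
Definition trh f (h : hlit) : hlit :=
  match h with HEx i => HAtom true i (ysof f i) | h => h end.
Definition trc f (c : clause) : clause :=
  Clause (cl_betas c) (trh f (cl_H1 c)) (trh f (cl_H2 c)).
Definition trf f : soformula := SOF (Defs.prefix f) (fovars f) (map (trc f) (clauses f)).

Lemma ex_vars_iff (A : finType) xs (s : nat -> A) P :
  exists_vars xs s P <-> exists s', (forall y, y \notin xs -> s' y = s y) /\ P s'.
Proof.
elim: xs s => [|x xs IH] s /=.
  split; [by exists s | by move=> [s' [H HP]]; have -> : s = s' by apply: functional_extensionality => y; rewrite H].
split.
  move=> [a /IH [s' [H HP]]]; exists s'; split=> // y; rewrite in_cons negb_or => /andP[Hx Hy].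
  by rewrite H // /upd (negbTE Hx).
move=> [s' [H HP]]; exists (s' x); apply/IH; exists s'; split=> // y Hy.
rewrite /upd; case: eqP => [->//|/eqP Hx]; apply: H; by rewrite in_cons negb_or Hx.
Qed.

Lemma fa_vars_iff (A : finType) xs (s : nat -> A) P :
  forall_vars xs s P <-> forall s', (forall y, y \notin xs -> s' y = s y) -> P s'.
Proof.
elim: xs s => [|x xs IH] s /=.
  split; [by move=> HP s' H; have -> : s' = s by apply: functional_extensionality => y; rewrite H | by move=> H; apply: H].
split.
  move=> H s' Hs'. have := H (s' x) => /IH; apply=> y Hy.
  rewrite /upd; case: eqP => [->//|/eqP Hx]; apply: Hs'; by rewrite in_cons negb_or Hx.
move=> H a; apply/IH => s' Hs'; apply: H => y; rewrite in_cons negb_or => /andP[Hx Hy].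
by rewrite Hs' // /upd (negbTE Hx).
Qed.

Lemma prefix_mono (A : finType) pre i (rho : nat -> seq A -> Prop) (P Q : _ -> Prop) :
  (forall r, P r -> Q r) -> sat_prefix pre i rho P -> sat_prefix pre i rho Q.
Proof.
move=> PQ; elim: pre i rho => [|[q n] pre IH] i rho /=; first exact: PQ.
case: q => [[R H]|H R]; [exists R|]; apply: IH; exact: H.
Qed.

Lemma prefix_ex (A : finType) pre i (rho : nat -> seq A -> Prop) (P : _ -> Prop) :
  all fst pre -> sat_prefix pre i rho P ->
  exists r, sat_prefix pre i rho (fun r' => r' = r) /\ P r.
Proof.
elim: pre i rho => [|[q n] pre IH] i rho /=; first by move=> _ HP; exists rho.
case: q => //= Hall [R H]. have [r [H1 H2]] := IH _ _ Hall H.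
by exists r; split=> //; exists R.
Qed.

Lemma in_flatten_map (X : Type) (g : X -> seq nat) x xs y :
  List.In x xs -> y \in g x -> y \in flatten (map g xs).
Proof.
elim: xs => [|z zs IH] //= [->|Hin] Hy; rewrite mem_cat ?Hy //.
by rewrite IH ?orbT.
Qed.

Lemma le_foldr_max y l : y \in l -> y <= foldr maxn 0 l.
Proof.
elim: l => [|z l IH] //=; rewrite in_cons => /orP[/eqP->|H].
  by rewrite leq_maxl.
by apply: leq_trans (IH H) (leq_maxr _ _).
Qed.

Lemma bnd_fo f y : y \in fovars f -> y < bnd f.
Proof. by move=> H; rewrite ltnS le_foldr_max // mem_cat H. Qed.

Lemma bnd_cl f c y : List.In c (clauses f) -> y \in vars_clause c -> y < bnd f.
Proof.
move=> Hc H; rewrite ltnS le_foldr_max // mem_cat (in_flatten_map Hc H) orbT //.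
Qed.

Lemma tlit_agree (A : finType) (I : nat -> seq A -> bool) (s1 s2 : nat -> A) l :
  (forall y, y \in vars_tlit l -> s1 y = s2 y) -> eval_tlit I s1 l = eval_tlit I s2 l.
Proof.
case: l => [b j ys|b y1 y2] /= H.
  by rewrite (_ : map s1 ys = map s2 ys) //; apply/eq_in_map => y0 Hy0; exact: H.
by rewrite !H ?mem_head // in_cons mem_head orbT.
Qed.

Lemma betas_agree (A : finType) (I : nat -> seq A -> bool) (s1 s2 : nat -> A) c :
  (forall y, y \in vars_clause c -> s1 y = s2 y) ->
  List.Exists (fun l => eval_tlit I s1 l) (cl_betas c) <->
  List.Exists (fun l => eval_tlit I s2 l) (cl_betas c).
Proof.
move=> H; rewrite !List.Exists_exists; split=> [[l [Hl E]]|[l [Hl E]]]; exists l; split=> //.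
  rewrite -(tlit_agree I (s1:=s1)) // => y Hy; apply: H; rewrite mem_cat (in_flatten_map Hl Hy) //.
rewrite (tlit_agree I (s2:=s2)) // => y Hy; apply: H; rewrite mem_cat (in_flatten_map Hl Hy) //.
Qed.

Lemma hlit_fwd (A : finType) f (r : nat -> seq A -> Prop) (s1 s2 : nat -> A) h :
  wf_hlit f h -> (forall y, y \in vars_hlit h -> s1 y = s2 y) ->
  (forall i, i < size (Defs.prefix f) -> (exists t, size t = so_arity f i /\ r i t) ->
      r i (map s2 (ysof f i))) ->
  eval_hlit f r s1 h -> eval_hlit (trf f) r s2 (trh f h).
Proof.
case: h => [b i zs|i|] //= Hwf H Hy.
  by rewrite (_ : map s1 zs = map s2 zs) //; apply/eq_in_map => y0 Hy0; exact: H.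
exact: Hy.
Qed.

Lemma hlit_bwd (A : finType) f (r : nat -> seq A -> Prop) (s1 s2 : nat -> A) h :
  (forall y, y \in vars_hlit h -> s1 y = s2 y) ->
  eval_hlit (trf f) r s2 (trh f h) -> eval_hlit f r s1 h.
Proof.
case: h => [b i zs|i|] //= H.
  by rewrite (_ : map s1 zs = map s2 zs) //; apply/eq_in_map => y0 Hy0; exact: H.
move=> Hr; exists (map s2 (ysof f i)); split=> //.
by rewrite /ysof !size_map size_iota.
Qed.

Lemma wf_trh f h : wf_hlit f h -> wf_hlit (trf f) (trh f h).
Proof.
case: h => //= i Hi; rewrite Hi /= /ysof size_map size_iota //.
Qed.

Lemma not_HEx_trh f h : not_HEx (trh f h).
Proof. by case: h. Qed.

Lemma nth_le_sumn (l : seq nat) i : nth 0 l i <= sumn l.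
Proof.
elim: l i => [|x l IH] [|i] //=; first exact: leq_addr.
exact: leq_trans (IH i) (leq_addl _ _).
Qed.

Lemma ar_lt_K f i : so_arity f i < Kof f.
Proof. by rewrite ltnS /so_arity nth_le_sumn. Qed.

Theorem proposition2p4 (tau : seq nat) (f : soformula) :
  is_Sigma11_KROMr tau f ->
  exists ds : seq (seq nat * soformula),
    ds <> [::] /\
    (forall d, List.In d ds -> is_Sigma11_KROM tau d.2) /\
    (forall (A : finType) (I : nat -> seq A -> bool), 0 < #|A| ->
       forall s : nat -> A,
         sat I f s <->
         exists d, List.In d ds /\ exists_vars d.1 s (fun s' => sat I d.2 s')).
Proof.
move=> /andP[Hkr Hs11].
set N := bnd f. set K := Kof f. set m := size (Defs.prefix f).
exists [:: (iota N (m * K), trf f)]; split=> //; split.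
  move=> d [<-|[]] /=; rewrite /is_Sigma11_KROM /is_SO_KROM /is_Sigma11 /=.
  have -> : all fst (Defs.prefix f) by []. rewrite andbT; apply/andP; split.
    rewrite /is_SO_KROMr /= all_map; apply: sub_all Hkr => c /andP[/andP[Hb H1] H2].
    by rewrite /= /wf_clause /= Hb !wf_trh.
  by elim: (clauses f) => //= c cs ->; rewrite !not_HEx_trh.
move=> A I /card_gt0P [a0 _] s; split.
- rewrite /sat => /(prefix_ex Hs11) [r [Hr Hb]].
  exists (iota N (m * K), trf f); split; first by left.
  have HW : forall i, exists w : seq A, size w = so_arity f i /\
      ((exists t, size t = so_arity f i /\ r i t) -> r i w).
    move=> i; case: (classic (exists t, size t = so_arity f i /\ r i t)).
      by move=> [t [Ht Hrt]]; exists t; split=> // _.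
    by move=> Hn; exists (nseq (so_arity f i) a0); rewrite size_nseq; split=> // /Hn.
  pose W i := proj1_sig (constructive_indefinite_description _ (HW i)).
  have HWp i : size (W i) = so_arity f i /\
      ((exists t, size t = so_arity f i /\ r i t) -> r i (W i)).
    exact: (proj2_sig (constructive_indefinite_description _ (HW i))).
  pose s'' y := if (N <= y) && (y < N + m * K)
                then nth a0 (W ((y - N) %/ K)) ((y - N) %% K) else s y.
  have Ks : 0 < K by [].
  have Hmap i : i < m -> map s'' (ysof f i) = W i.
    move=> Him; rewrite /ysof -map_comp.
    have HK := ar_lt_K f i.
    rewrite (_ : map _ _ = map (nth a0 (W i)) (iota 0 (so_arity f i))); last first.
      apply/eq_in_map => k; rewrite mem_iota add0n => /andP[_ Hk] /=.
      have Hk' : k < K by apply: leq_trans Hk (ltnW HK).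
      have HmK : i.+1 * K <= m * K by rewrite leq_mul2r Him orbT.
      rewrite /s'' leq_addr /= addKn.
      have -> : N + (i * K + k) < N + m * K.
        rewrite ltn_add2l; apply: leq_trans HmK; rewrite mulSn; lia.
      by rewrite divnMDl // divn_small // addn0 modnMDl modn_small.
    by have [Hsz _] := HWp i; rewrite -{1}Hsz -/(mkseq _ _) mkseq_nth.
  rewrite ex_vars_iff; exists s''; split.
    by move=> y; rewrite mem_iota /s'' => /negbTE ->.
  apply: prefix_mono Hr => r' -> {r'}.
  move: Hb; rewrite !fa_vars_iff => Hb s2 H2 c' /List.in_map_iff [c [<- Hc]].
  pose s1 y := if y \in fovars f then s2 y else s y.
  have Hag : forall y, y < N -> s1 y = s2 y.
    move=> y Hy; rewrite /s1; case: ifP => // Hf.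
    by rewrite H2 ?Hf // /s'' leqNgt Hy.
  have : sat_clause I f r s1 c.
    by apply: Hb Hc => y /negbTE Hy; rewrite /s1 Hy.
  have Hag' : forall y, y \in vars_clause c -> s1 y = s2 y.
    by move=> y Hy; apply: Hag; apply: (bnd_cl Hc Hy).
  have Hwf : wf_clause tau f c.
    move: Hkr Hc; rewrite /is_SO_KROMr; elim: (clauses f) => //= c0 cs IH /andP[H0 H] [<-|Hc'] //; exact: IH.
  case/andP: Hwf => /andP[_ W1] W2.
  have Hy : forall i, i < size (Defs.prefix f) -> (exists t, size t = so_arity f i /\ r i t) ->
      r i (map s2 (ysof f i)).
    move=> i Hi Hex.
    rewrite (_ : map s2 _ = map s'' (ysof f i)); first by rewrite Hmap //; exact: (HWp i).2.
    apply/eq_in_map => y; rewrite /ysof => /mapP [k _ ->]; apply: H2.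
    apply/negP => /(@bnd_fo f); rewrite -/N; lia.
  rewrite /sat_clause /=.
  move=> [HB|[HH|HH]]; [left | right; left | right; right].
  + exact: (betas_agree I Hag').1 HB.
  + apply: (hlit_fwd W1 _ Hy HH) => y Hy'; apply: Hag'; by rewrite /vars_clause !mem_cat Hy' !orbT.
  + apply: (hlit_fwd W2 _ Hy HH) => y Hy'; apply: Hag'; by rewrite /vars_clause !mem_cat Hy' !orbT.
- move=> [d [[<-|[]] /=]]; rewrite ex_vars_iff => [[s'' [Hs'' Hsat]]].
  move: Hsat; rewrite /sat /= => /(prefix_ex Hs11) [r [Hr Hb]].
  apply: prefix_mono Hr => r' -> {r'}.
  move: Hb; rewrite !fa_vars_iff => Hb s1 H1 c Hc.
  pose s2 y := if y \in fovars f then s1 y else s'' y.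
  have Hag : forall y, y < N -> s1 y = s2 y.
    move=> y Hy; rewrite /s2; case: ifP => // Hf.
    rewrite Hs'' ?H1 ?Hf // mem_iota leqNgt Hy //.
  have Hag' : forall y, y \in vars_clause c -> s1 y = s2 y.
    by move=> y Hy; apply: Hag; apply: (bnd_cl Hc Hy).
  have : sat_clause I (trf f) r s2 (trc f c).
    by apply: Hb (List.in_map _ _ _ Hc) => y /negbTE Hy; rewrite /s2 Hy.
  rewrite /sat_clause /=.
  move=> [HB|[HH|HH]]; [left | right; left | right; right].
  + exact: (betas_agree I Hag').2 HB.
  + apply: (hlit_bwd _ HH) => y Hy'; apply: Hag'; by rewrite /vars_clause !mem_cat Hy' !orbT.
  + apply: (hlit_bwd _ HH) => y Hy'; apply: Hag'; by rewrite /vars_clause !mem_cat Hy' !orbT.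
Qed.
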